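(* Let $G=\mathrm{SL}(2,F)$, $x\in\mathcal B(G)$ a vertex, $d>0$, and $\Gamma\in\mathfrak g^*_{x,-d}\setminus\mathfrak g^*_{x,-d+}$ such that $\Gamma+\mathfrak g^*_{x,-d+}$ contains a nilpotent element. Then there is a unique chamber $\mathcal C=\mathcal C_\Gamma$ of $\mathcal B(G)$ adjacent to $x$ such that $\Gamma\in\mathfrak g^*_{x,-d}\cap\mathfrak g^*_{z,-d+}$ for every $z\in\mathcal C$; it depends only on the coset $\Gamma+\mathfrak g^*_{x,-d+}$. Moreover, for $z\in\mathcal C$, $\mathrm{Cent}_{G_x}(\Gamma)=\mathrm{Cent}_{G_z}(\Gamma)$.
   Context: $F$ is a nonarchimedean local field with residual characteristic $p\geq3$; $G=\mathrm{SL}(2,F)$, $\mathfrak g=\mathfrak{sl}(2,F)\cong\mathfrak g^*$ via the trace form, $G$ acting by conjugation. $\mathcal B(G)$ is the Bruhat–Tits tree; for $y\in\mathcal B(G)$, $G_y$ is the stabilizer of $y$ and $\mathfrak g^*_{y,r}$ ($r\in\mathbb R$) are the Moy–Prasad lattices, $\mathfrak g^*_{y,r+}=\bigcup_{s>r}\mathfrak g^*_{y,s}$. *)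

(* Defs.v *)
From HB Require Import structures.
From mathcomp Require Import all_boot all_order all_algebra.
From mathcomp Require Import reals.
Set Implicit Arguments. Unset Strict Implicit. Unset Printing Implicit Defensive.
Import Order.TTheory GRing.Theory Num.Theory.
Local Open Scope ring_scope.

Section Defs.
Variable F : fieldType.
Variable val : F -> int.   (* the normalized discrete valuation; its value at 0 is irrelevant *)

Definition in_OF (a : F) : Prop := a = 0 \/ 0 <= val a.
Definition in_PF (a : F) : Prop := a = 0 \/ 1 <= val a.

Definition nonarch_local_field (p : nat) : Prop :=
  [/\ (forall a b, a != 0 -> b != 0 -> val (a * b) = val a + val b),
      (forall a b, a != 0 -> b != 0 -> a + b != 0 ->
          Num.min (val a) (val b) <= val (a + b)),
      (exists w : F, w != 0 /\ val w = 1) &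
      [/\ 
      (forall u : nat -> F,
         (forall N : int, exists M, forall m n, (M <= m)%N -> (M <= n)%N ->
              u m = u n \/ N <= val (u m - u n)) ->
         exists l, forall N : int, exists M, forall n, (M <= n)%N ->
              u n = l \/ N <= val (u n - l)),
      (exists s : seq F, (forall b, b \in s -> in_OF b) /\
         forall a, in_OF a -> exists2 b, b \in s & in_PF (a - b)) &
      [/\ prime p, (3 <= p)%N & in_PF (p%:R)] ] ].

Variable R : realType.

(* The splittable norm  x1 e1 + x2 e2 |-> min(val x1 + c1, val x2 + c2),
   where the columns e1, e2 of B form a basis of F^2 (valid on v != 0). *)
Definition nrm (B : 'M[F]_2) (c1 c2 : R) (v : 'cV[F]_2) : R :=
  let w := invmx B *m v in
  let a := w 0 0 in let b := w 1 0 in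
  if a == 0 then (val b)%:~R + c2
  else if b == 0 then (val a)%:~R + c1
  else Num.min ((val a)%:~R + c1) ((val b)%:~R + c2).

(* Points of the Bruhat-Tits tree B(SL(2,F)) are homothety classes of
   splittable norms on F^2 (Goldman-Iwahori); we represent a point by a
   norm alpha (only its values on nonzero vectors matter), and all
   predicates below are invariant under homothety alpha ~ alpha + c. *)
Definition homot (alpha beta : 'cV[F]_2 -> R) : Prop :=
  exists c : R, forall v, v != 0 -> alpha v = beta v + c.

Definition is_point (alpha : 'cV[F]_2 -> R) : Prop :=
  exists B c1 c2, B \in unitmx /\ forall v, v != 0 -> alpha v = nrm B c1 c2 v.

(* vertices = classes of lattice norms *)
Definition is_vertex (alpha : 'cV[F]_2 -> R) : Prop :=
  exists B, B \in unitmx /\ homot alpha (nrm B 0 0).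

(* the (open) chamber with endpoints the vertices [nrm B 0 0], [nrm B 0 1] *)
Definition chamber_of (B : 'M[F]_2) (alpha : 'cV[F]_2 -> R) : Prop :=
  exists t : R, 0 < t < 1 /\ homot alpha (nrm B 0 t).

Definition is_chamber (C : ('cV[F]_2 -> R) -> Prop) : Prop :=
  exists B, B \in unitmx /\ forall alpha, C alpha <-> chamber_of B alpha.

Definition adjacent (C : ('cV[F]_2 -> R) -> Prop) (x : 'cV[F]_2 -> R) : Prop :=
  exists B, [/\ B \in unitmx, (forall alpha, C alpha <-> chamber_of B alpha)
             & homot x (nrm B 0 0) \/ homot x (nrm B 0 1)].

Definition in_sl2 (X : 'M[F]_2) : Prop := \tr X = 0.

Definition MP (alpha : 'cV[F]_2 -> R) (r : R) (X : 'M[F]_2) : Prop :=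
  in_sl2 X /\ forall v, v != 0 -> X *m v != 0 -> alpha v + r <= alpha (X *m v).
Definition MP_plus (alpha : 'cV[F]_2 -> R) (r : R) (X : 'M[F]_2) : Prop :=
  exists2 s : R, r < s & MP alpha s X.

(* dual Moy-Prasad lattices g*_{x,r}, g* identified with g via the trace form:
   g*_{x,r} = { Gamma | tr(Gamma Y) in P_F for all Y in g_{x,(-r)+} } *)
Definition MPd (alpha : 'cV[F]_2 -> R) (r : R) (G : 'M[F]_2) : Prop :=
  in_sl2 G /\ forall Y, MP_plus alpha (- r) Y -> in_PF (\tr (G *m Y)).
Definition MPd_plus (alpha : 'cV[F]_2 -> R) (r : R) (G : 'M[F]_2) : Prop :=
  exists2 s : R, r < s & MPd alpha s G.

Definition in_stab (alpha : 'cV[F]_2 -> R) (g : 'M[F]_2) : Prop :=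
  \det g = 1 /\ homot (fun v => alpha (g *m v)) alpha.

(* g in Cent_{G_x}(Gamma) (coadjoint action = conjugation via trace form) *)
Definition in_cent (alpha : 'cV[F]_2 -> R) (G : 'M[F]_2) (g : 'M[F]_2) : Prop :=
  in_stab alpha g /\ g *m G *m invmx g = G.

Definition nilpotent_sl2 (N : 'M[F]_2) : Prop :=
  in_sl2 N /\ exists k : nat, N ^+ k = 0.

End Defs.

(* Main.v *)
Require Import Defs.
From HB Require Import structures.
From mathcomp Require Import all_boot all_order all_algebra.
From mathcomp Require Import reals.
From mathcomp Require Import ring lra zify.
From Stdlib Require Import Classical.
Set Implicit Arguments. Unset Strict Implicit. Unset Printing Implicit Defensive.
Import Order.TTheory GRing.Theory Num.Theory.
Local Open Scope ring_scope.

Section S.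
Variable F : fieldType.
Variable val : F -> int.
Hypothesis vM : forall {a b : F}, a != 0 -> b != 0 -> val (a * b) = val a + val b.
Hypothesis vD : forall {a b : F}, a != 0 -> b != 0 -> a + b != 0 ->
          Num.min (val a) (val b) <= val (a + b).
Variable R : realType.

Definition geR (r : R) (a : F) := a = 0 \/ r <= (val a)%:~R.

Lemma v1 : val 1 = 0.
Proof. have := @vM 1 1 (oner_neq0 F) (oner_neq0 F); rewrite mulr1 => h; lia. Qed.

Lemma vN1 : val (-1) = 0.
Proof.
have h1 : (-1 : F) != 0 by rewrite oppr_eq0 oner_neq0.
have := vM h1 h1; rewrite mulrNN mulr1 v1 => h; lia.
Qed.

Lemma vN a : val (- a) = val a.
Proof.
have [->|a0] := eqVneq a 0; first by rewrite oppr0.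
have h1 : (-1 : F) != 0 by rewrite oppr_eq0 oner_neq0.
by rewrite -mulN1r vM // vN1 add0r.
Qed.

Lemma vV a : a != 0 -> val a^-1 = - val a.
Proof.
move=> a0; have ai : a^-1 != 0 by rewrite invr_eq0.
have := vM a0 ai; rewrite divff // v1 => h; lia.
Qed.

Lemma geR0 r : geR r 0. Proof. by left. Qed.

Lemma geR_le r r' a : r' <= r -> geR r a -> geR r' a.
Proof. move=> h [->|h2]; [left|right] => //; exact: le_trans h2. Qed.

Lemma geRN r a : geR r a -> geR r (- a).
Proof. by case=> [->|h]; [left; rewrite oppr0|right; rewrite vN]. Qed.

Lemma geRD r a b : geR r a -> geR r b -> geR r (a + b).
Proof.
case=> [->|ha]; first by rewrite add0r.
case=> [->|hb]; first by rewrite addr0; right.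
have [->|a0] := eqVneq a 0; first by rewrite add0r; right.
have [->|b0] := eqVneq b 0; first by rewrite addr0; right.
have [e|ab0] := eqVneq (a + b) 0; first by left.
right; have := vD a0 b0 ab0; rewrite ge_min => /orP[] h.
- apply: le_trans ha _; by rewrite ler_int.
- apply: le_trans hb _; by rewrite ler_int.
Qed.

Lemma geRB r a b : geR r a -> geR r b -> geR r (a - b).
Proof. by move=> ha hb; apply: geRD => //; apply: geRN. Qed.

Lemma geRM r s a b : geR r a -> geR s b -> geR (r + s) (a * b).
Proof.
case=> [->|ha]; first by rewrite mul0r; left.
case=> [->|hb]; first by rewrite mulr0; left.
have [->|a0] := eqVneq a 0; first by rewrite mul0r; left.
have [->|b0] := eqVneq b 0; first by rewrite mulr0; left.
right; rewrite vM // intrD; exact: lerD.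
Qed.

Lemma geR_val a : geR (val a)%:~R a.
Proof. by right. Qed.

Lemma geR_nz r a : geR r a -> a != 0 -> r <= (val a)%:~R.
Proof. by case=> [->|//]; rewrite eqxx. Qed.

Lemma int_lt1 (n m : int) : (n%:~R : R) - 1 < m%:~R -> n <= m.
Proof.
have -> : (n%:~R : R) - 1 = (n - 1)%:~R by rewrite intrB.
rewrite ltr_int => h; lia.
Qed.

Lemma geR_int (n : int) (r : R) a : n%:~R - 1 < r -> geR r a -> geR n%:~R a.
Proof.
move=> h [->|h2]; [left|right] => //.
rewrite ler_int; apply: int_lt1; exact: lt_le_trans h h2.
Qed.

Lemma geR_PF r a : 0 < r -> geR r a -> in_PF val a.
Proof.
move=> r0 [->|h]; [by left|right].
have : (1%:~R : R) - 1 < (val a)%:~R by rewrite subrr; exact: lt_le_trans h.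
by move/int_lt1.
Qed.

Lemma PF_geR a : in_PF val a -> geR 1 a.
Proof. by case=> [->|h]; [left|right; rewrite -(ler_int R) in h]. Qed.

Lemma geR_div r a b : b != 0 -> geR r a -> geR (r - (val b)%:~R) (a / b).
Proof.
move=> b0 h; by have := geRM h (geR_val (b^-1)); rewrite vV // intrN.
Qed.


Lemma sum2 (f : 'I_2 -> F) : \sum_(i < 2) f i = f 0 + f 1.
Proof. by rewrite big_ord_recl big_ord1; congr (f _ + f _); apply: val_inj. Qed.
Lemma mul2E m n (A : 'M[F]_(m,2)) (B : 'M[F]_(2,n)) i j :
  (A *m B) i j = A i 0 * B 0 j + A i 1 * B 1 j.
Proof. by rewrite mxE sum2. Qed.
Lemma tr2 (A : 'M[F]_2) : \tr A = A 0 0 + A 1 1.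
Proof. by rewrite /mxtrace sum2. Qed.
Lemma det2 (A : 'M[F]_2) : \det A = A 0 0 * A 1 1 - A 0 1 * A 1 0.
Proof.
rewrite (expand_det_row _ 0) sum2 /cofactor !det_mx11 !mxE /=.
have -> : lift (0 : 'I_2) (0 : 'I_1) = 1 by apply: val_inj.
have -> : lift (1 : 'I_2) (0 : 'I_1) = 0 by apply: val_inj.
rewrite (_ : (0 + 1 %% 2)%N = 1%N) // (_ : (0 + 0)%N = 0%N) //.
rewrite expr0 expr1; ring.
Qed.
Lemma ord2P (i : 'I_2) : i = 0 \/ i = 1.
Proof. case: i => [[|[|k]]] Hk; [left|right|by []]; exact: val_inj. Qed.
Lemma ord1P (i : 'I_1) : i = 0.
Proof. case: i => [[|k]] Hk; [exact: val_inj|by []]. Qed.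
Lemma mx2_ext (A B : 'M[F]_2) : A 0 0 = B 0 0 -> A 0 1 = B 0 1 ->
  A 1 0 = B 1 0 -> A 1 1 = B 1 1 -> A = B.
Proof.
move=> h1 h2 h3 h4; apply/matrixP => i j.
by case: (ord2P i) => ->; case: (ord2P j) => ->.
Qed.
Lemma cv2_eq0 (w : 'cV[F]_2) : w 0 0 = 0 -> w 1 0 = 0 -> w = 0.
Proof.
move=> h1 h2; apply/matrixP => i j; rewrite (ord1P j) mxE.
by case: (ord2P i) => ->.
Qed.
Definition mx22 (a b c e : F) : 'M[F]_2 :=
  \matrix_(i < 2, j < 2) if i == 0 then (if j == 0 then a else b)
                         else (if j == 0 then c else e).
Lemma mx22E a b c e :
  [/\ mx22 a b c e 0 0 = a, mx22 a b c e 0 1 = b, mx22 a b c e 1 0 = c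
    & mx22 a b c e 1 1 = e].
Proof. by rewrite !mxE. Qed.
Definition cv2 (a b : F) : 'cV[F]_2 := \col_(i < 2) if i == 0 then a else b.
Lemma cv2E a b : cv2 a b 0 0 = a /\ cv2 a b 1 0 = b.
Proof. by rewrite !mxE. Qed.

Lemma unit_mulK (B : 'M[F]_2) (w : 'cV[F]_2) : B \in unitmx -> w != 0 -> B *m w != 0.
Proof.
move=> Bu w0; apply/eqP => h; move/eqP: w0; apply.
by rewrite -(mulKmx Bu w) h mulmx0.
Qed.

Lemma inv_uniq (A A' : 'M[F]_2) : A' *m A = 1%:M -> invmx A = A'.
Proof.
move=> h; have [Au _] : A' \in unitmx /\ A \in unitmx by exact: mulmx1_unit.
have [_ Au2] := mulmx1_unit h.
by rewrite -[RHS]mulmx1 -(mulmxV Au2) mulmxA h mul1mx.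
Qed.

Definition Nt (t : R) (w : 'cV[F]_2) : R := nrm val (1%:M) 0 t w.

Lemma nrmE B t v : nrm val B 0 t v = Nt t (invmx B *m v).
Proof. by rewrite /Nt /nrm invmx1 mul1mx. Qed.

Lemma Nt_ge t y w : w != 0 ->
  (y <= Nt t w <-> geR y (w 0 0) /\ geR (y - t) (w 1 0)).
Proof.
move=> w0; rewrite /Nt /nrm invmx1 mul1mx /=.
have [a0|a0] := eqVneq (w 0 0) 0.
  have b0 : w 1 0 != 0.
    by apply/eqP => b0; move/eqP: w0; apply; apply: cv2_eq0.
  rewrite a0; split.
    by move=> h; split; [left|right; lra].
  case=> _ [e|h]; [by rewrite e eqxx in b0|lra].
have [b0|b0] := eqVneq (w 1 0) 0.
  rewrite b0 addr0; split.
    by move=> h; split; [right|left].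
  by case=> [[e|h] _]; [rewrite e eqxx in a0|].
rewrite le_min addr0; split.
  by case/andP => h1 h2; split; [right|right; lra].
case=> [[e|h1] [e'|h2]]; rewrite ?e ?e' ?eqxx // in a0 b0 *.
apply/andP; split => //; lra.
Qed.

Definition EB t s (Y : 'M[F]_2) := [/\ geR s (Y 0 0), geR (s + t) (Y 0 1),
  geR (s - t) (Y 1 0) & geR s (Y 1 1)].
Definition OB t s (Y : 'M[F]_2) := forall w, w != 0 -> Y *m w != 0 ->
  Nt t w + s <= Nt t (Y *m w).

Lemma EB_OB t s Y : EB t s Y -> OB t s Y.
Proof.
move=> [h00 h01 h10 h11] w w0 Yw0; set y := Nt t w.
have [g0 g1] := (Nt_ge t y w0).1 (lexx _).
apply/(Nt_ge _ _ Yw0); rewrite !mul2E; split.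
  apply: geRD.
    by apply: (geR_le _ (geRM h00 g0)); lra.
  by apply: (geR_le _ (geRM h01 g1)); lra.
apply: geRD.
  by apply: (geR_le _ (geRM h10 g0)); lra.
by apply: (geR_le _ (geRM h11 g1)); lra.
Qed.

Lemma Nt_e1 t : Nt t (cv2 1 0) = 0.
Proof.
rewrite /Nt /nrm invmx1 mul1mx /= !mxE /= oner_eq0 eqxx v1; lra.
Qed.
Lemma Nt_e2 t : Nt t (cv2 0 1) = t.
Proof.
rewrite /Nt /nrm invmx1 mul1mx /= !mxE /= eqxx v1; lra.
Qed.

Lemma OB_EB t s Y : OB t s Y -> EB t s Y.
Proof.
move=> h.
have e10 : cv2 (1 : F) 0 != 0.
  by apply/eqP => /matrixP /(_ 0 0); rewrite !mxE /=; apply/eqP; rewrite oner_eq0.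
have e20 : cv2 (0 : F) 1 != 0.
  by apply/eqP => /matrixP /(_ 1 0); rewrite !mxE /=; apply/eqP; rewrite oner_eq0.
have E1 i : (Y *m cv2 1 0) i 0 = Y i 0 by rewrite mul2E !mxE /=; ring.
have E2 i : (Y *m cv2 0 1) i 0 = Y i 1 by rewrite mul2E !mxE /=; ring.
have [A1 A2] : geR s (Y 0 0) /\ geR (s - t) (Y 1 0).
  have [z|nz] := eqVneq (Y *m cv2 1 0) 0.
    by rewrite -!E1 z !mxE; split; left.
  have := h _ e10 nz; rewrite Nt_e1 add0r => /(Nt_ge _ _ nz); by rewrite !E1.
have [A3 A4] : geR (s + t) (Y 0 1) /\ geR s (Y 1 1).
  have [z|nz] := eqVneq (Y *m cv2 0 1) 0.
    by rewrite -!E2 z !mxE; split; left.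
  have := h _ e20 nz; rewrite Nt_e2 => /(Nt_ge _ _ nz); rewrite !E2.
  by case=> g1 g2; split; [apply: (geR_le _ g1); lra|apply: (geR_le _ g2); lra].
by split.
Qed.

Lemma EB_eq t c h : h \in unitmx -> EB t c h -> EB t (- c) (invmx h) ->
  forall w, w != 0 -> Nt t (h *m w) = Nt t w + c.
Proof.
move=> hu h1 h2 w w0.
have hw : h *m w != 0 by exact: unit_mulK.
have := EB_OB h1 w0 hw.
have := EB_OB h2 hw; rewrite mulKmx // => /(_ w0) H1 H2; lra.
Qed.

Lemma eq_EB t c h : h \in unitmx ->
  (forall w, w != 0 -> Nt t (h *m w) = Nt t w + c) ->
  EB t c h /\ EB t (- c) (invmx h).
Proof.
move=> hu H; split; apply: OB_EB.
  by move=> w w0 _; rewrite H.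
move=> w w0 hw; have := H _ hw; rewrite mulKVmx // => ->; lra.
Qed.


Lemma homot_refl (a : 'cV[F]_2 -> R) : homot a a.
Proof. by exists 0 => v _; rewrite addr0. Qed.
Lemma homot_sym (a b : 'cV[F]_2 -> R) : homot a b -> homot b a.
Proof. by case=> c h; exists (- c) => v v0; rewrite h //; ring. Qed.
Lemma homot_trans (a b e : 'cV[F]_2 -> R) : homot a b -> homot b e -> homot a e.
Proof. by case=> c h [c' h']; exists (c' + c) => v v0; rewrite h // h' //; ring. Qed.

Lemma MP_homot (a b : 'cV[F]_2 -> R) r X : homot a b -> MP a r X -> MP b r X.
Proof.
case=> c h [hs H]; split => // v v0 Xv0.
have := H v v0 Xv0; rewrite !h //; lra.
Qed.
Lemma MPd_homot (a b : 'cV[F]_2 -> R) r G : homot a b -> MPd val a r G -> MPd val b r G.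
Proof.
move=> hab [hs H]; split => // Y [s hs' hY]; apply: H; exists s => //.
exact: MP_homot (homot_sym hab) hY.
Qed.
Lemma MPdp_homot (a b : 'cV[F]_2 -> R) r G : homot a b -> MPd_plus val a r G -> MPd_plus val b r G.
Proof. by move=> hab [s hs h]; exists s => //; apply: MPd_homot hab h. Qed.

Definition conj (B X : 'M[F]_2) := invmx B *m X *m B.

Lemma conjM B X Y : B \in unitmx -> conj B (X *m Y) = conj B X *m conj B Y.
Proof.
move=> Bu; rewrite /conj !mulmxA; congr (_ *m _).
by rewrite -!mulmxA (mulmxA B) (mulmxV Bu) mul1mx.
Qed.
Lemma tr_conj B X : B \in unitmx -> \tr (conj B X) = \tr X.
Proof. by move=> Bu; rewrite /conj mxtrace_mulC mulmxA (mulmxV Bu) mul1mx. Qed.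
Lemma conjK B Y : B \in unitmx -> conj B (B *m Y *m invmx B) = Y.
Proof.
move=> Bu; rewrite /conj !mulmxA (mulVmx Bu) mul1mx -mulmxA (mulVmx Bu) mulmx1 //.
Qed.
Lemma conjD B X Y : conj B (X + Y) = conj B X + conj B Y.
Proof. by rewrite /conj mulmxDr mulmxDl. Qed.
Lemma conjB B X Y : conj B (X - Y) = conj B X - conj B Y.
Proof. by rewrite /conj mulmxBr mulmxBl. Qed.

Lemma MP_frame B t r X : B \in unitmx ->
  (MP (nrm val B 0 t) r X <-> in_sl2 X /\ OB t r (conj B X)).
Proof.
move=> Bu; split => -[hs H]; split => //.
  move=> w w0 Yw0; set v := B *m w.
  have v0 : v != 0 by exact: unit_mulK.
  have Xv0 : X *m v != 0.
    apply/eqP => e; move/eqP: Yw0; apply.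
    by rewrite /conj -!mulmxA e !mulmx0.
  have := H v v0 Xv0; rewrite !nrmE /v (mulKmx Bu).
  by rewrite /conj -!mulmxA.
move=> v v0 Xv0; rewrite !nrmE.
have w0 : invmx B *m v != 0 by apply: unit_mulK => //; rewrite unitmx_inv.
have e : invmx B *m (X *m v) = conj B X *m (invmx B *m v).
  by rewrite /conj -!mulmxA (mulmxA B) (mulmxV Bu) mul1mx.
rewrite e; apply: H => //; rewrite -e; apply: unit_mulK => //; by rewrite unitmx_inv.
Qed.

Definition DF t r (G : 'M[F]_2) := forall Y : 'M[F]_2, \tr Y = 0 ->
  (exists2 s, - r < s & EB t s Y) -> in_PF val (\tr (G *m Y)).

Lemma MPd_frame B t r G : B \in unitmx ->
  (MPd val (nrm val B 0 t) r G <-> in_sl2 G /\ DF t r (conj B G)).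
Proof.
move=> Bu; split => -[hs H]; split => //.
  move=> Y' trY [s hs' hY]; set Y := B *m Y' *m invmx B.
  have hY' : conj B Y = Y' by rewrite conjK.
  have MY : MP (nrm val B 0 t) s Y.
    apply/MP_frame => //; split; last by rewrite hY'; apply: EB_OB.
    by rewrite /in_sl2 -(tr_conj _ Bu) hY'.
  have := H Y (ex_intro2 _ _ s hs' MY).
  by rewrite -(tr_conj _ Bu) conjM // hY'.
move=> Y [s hs' MY]; have /(MP_frame _ _ _ Bu) [trY OY] := MY.
rewrite -(tr_conj _ Bu) conjM //; apply: H.
  by rewrite tr_conj.
by exists s => //; apply: OB_EB.
Qed.


Lemma geR1F r : r <= 0 -> geR r (1 : F).
Proof. by move=> h; right; rewrite v1. Qed.

Lemma two_facts p : prime p -> (3 <= p)%N -> in_PF val (p%:R : F) ->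
  (2 : F) != 0 /\ val 2 = 0.
Proof.
move=> pp p3 pPF.
have natOF n : geR 0 (n%:R : F).
  elim: n => [|n IH]; first by left.
  by rewrite mulrS; apply: geRD => //; apply: geR1F.
have podd : odd p.
  by case: (even_prime pp) => // e; rewrite e in p3.
have ep : (p%:R : F) = 1 + 2 * (p./2)%:R.
  by rewrite -{1}(odd_double_half p) podd natrD -muln2 natrM mulrC.
have n2 : ~ geR 1 (2 : F).
  move=> h2.
  have : geR 1 (p%:R - 2 * (p./2)%:R : F).
    apply: geRB; first exact: PF_geR.
    by apply: (geR_le _ (geRM h2 (natOF p./2))); lra.
  rewrite ep addrK => -[/eqP|]; first by rewrite oner_eq0.
  rewrite v1 (_ : ((0 : int)%:~R : R) = 0) // => h.
  by move: (lt_le_trans ltr01 h); rewrite ltxx.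
have [e|nz] := eqVneq (2 : F) 0; first by exfalso; apply: n2; left.
split => //.
have g0 : geR 0 (2 : F) by apply: natOF 2.
have l0 := geR_nz g0 nz.
have l1 : ~ (1 <= (val 2)%:~R :> R) by move=> h; apply: n2; right.
have : (0 : int) <= val 2 by rewrite -(ler_int R).
have : ~ ((1 : int) <= val 2) by rewrite -(ler_int R).
lia.
Qed.

Variable pi : F.
Hypothesis pi0 : pi != 0.
Hypothesis vpi : val pi = 1.
Hypothesis two0 : (2 : F) != 0.
Hypothesis v2 : val 2 = 0.

Lemma vX k : val (pi ^+ k) = k%:Z.
Proof.
elim: k => [|k IH]; first by rewrite expr0 v1.
by rewrite exprS vM ?expf_neq0 // IH vpi; lia.
Qed.

Definition pw (n : int) : F :=
  match n with Posz k => pi ^+ k | Negz k => (pi ^+ k.+1)^-1 end.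
Lemma pw_nz n : pw n != 0.
Proof. by case: n => k /=; rewrite ?invr_eq0 expf_neq0. Qed.
Lemma val_pw n : val (pw n) = n.
Proof. case: n => k /=; rewrite ?vV ?expf_neq0 // vX //. Qed.

Lemma geR1 r a : 0 < r -> geR r a -> geR 1 a.
Proof.
move=> r0 h; have := @geR_int 1 r a; rewrite (_ : (1%:~R : R) = 1) //.
by apply=> //; lra.
Qed.

Lemma tr0E (G : 'M[F]_2) : \tr G = 0 -> G 1 1 = - G 0 0.
Proof. by rewrite tr2 => /eqP; rewrite addrC addr_eq0 => /eqP. Qed.

Lemma DF_nec_a t r G (n : int) : \tr G = 0 -> DF t r G -> - r < n%:~R ->
  geR (1 - n%:~R) (G 0 0).
Proof.
move=> trG H hn; set e := pw n.
have e0 : e != 0 by exact: pw_nz.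
set Y := mx22 e 0 0 (- e).
have trY : \tr Y = 0 by rewrite tr2 !mxE /= subrr.
have EY : EB t n%:~R Y.
  by split; rewrite !mxE /=; [right; rewrite val_pw|left|left|apply: geRN; right; rewrite val_pw].
have : in_PF val (\tr (G *m Y)) by apply: H => //; exists n%:~R.
rewrite tr2 !mul2E !mxE /= (tr0E trG) => /PF_geR.
have -> : G 0 0 * e + G 0 1 * 0 + (G 1 0 * 0 + - G 0 0 * - e) = (G 0 0) * (2 * e) by ring.
move/(geR_div (b := 2 * e)); rewrite mulf_neq0 // mulfK ?mulf_neq0 // vM // v2 val_pw add0r.
by apply.
Qed.

Lemma DF_nec_b t r G (n : int) : 0 <= t -> DF t r G -> - r < n%:~R ->
  geR (1 - n%:~R) (G 0 1).
Proof.
move=> t0 H hn; set e := pw n.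
have e0 : e != 0 by exact: pw_nz.
set Y := mx22 0 0 e 0.
have trY : \tr Y = 0 by rewrite tr2 !mxE /= addr0.
have EY : EB t n%:~R Y.
  split; rewrite !mxE /=; try by left.
  by right; rewrite val_pw; lra.
have : in_PF val (\tr (G *m Y)) by apply: H => //; exists n%:~R.
rewrite tr2 !mul2E !mxE /= => /PF_geR.
have -> : G 0 0 * 0 + G 0 1 * e + (G 1 0 * 0 + G 1 1 * 0) = (G 0 1) * e by ring.
by move/(geR_div e0); rewrite mulfK // val_pw.
Qed.

Lemma DF_nec_c t r G (n m : int) : DF t r G -> - r < n%:~R -> n%:~R + t <= m%:~R ->
  geR (1 - m%:~R) (G 1 0).
Proof.
move=> H hn hm; set e := pw m.
have e0 : e != 0 by exact: pw_nz.
set Y := mx22 0 e 0 0.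
have trY : \tr Y = 0 by rewrite tr2 !mxE /= addr0.
have EY : EB t n%:~R Y.
  split; rewrite !mxE /=; try by left.
  by right; rewrite val_pw.
have : in_PF val (\tr (G *m Y)) by apply: H => //; exists n%:~R.
rewrite tr2 !mul2E !mxE /= => /PF_geR.
have -> : G 0 0 * 0 + G 0 1 * 0 + (G 1 0 * e + G 1 1 * 0) = (G 1 0) * e by ring.
by move/(geR_div e0); rewrite mulfK // val_pw.
Qed.

Lemma DF_suff t r G al be ga : \tr G = 0 -> geR al (G 0 0) -> geR be (G 0 1) ->
  geR ga (G 1 0) -> r <= al -> r + t <= be -> r - t <= ga -> DF t r G.
Proof.
move=> trG g00 g01 g10 h1 h2 h3 Y trY [s hs [y00 y01 y10 y11]].
rewrite tr2 !mul2E (tr0E trG).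
apply: (@geR_PF 1); first lra.
apply: geRD; apply: geRD.
- by apply: (geR1 _ (geRM g00 y00)); lra.
- by apply: (geR1 _ (geRM g01 y10)); lra.
- by apply: (geR1 _ (geRM g10 y01)); lra.
- by apply: (geR1 _ (geRM (geRN g00) y11)); lra.
Qed.

Definition MG r (A : 'M[F]_2) := forall i j, geR r (A i j).

Lemma MG_mul r s A B : MG r A -> MG s B -> MG (r + s) (A *m B).
Proof. by move=> hA hB i j; rewrite mul2E; apply: geRD; apply: geRM. Qed.
Lemma MG_B r A B : MG r A -> MG r B -> MG r (A - B).
Proof. by move=> hA hB i j; rewrite !mxE; apply: geRB. Qed.
Lemma MG_le r r' A : r' <= r -> MG r A -> MG r' A.
Proof. by move=> h hA i j; apply: geR_le h _. Qed.
Lemma MG_of r (A : 'M[F]_2) : geR r (A 0 0) -> geR r (A 0 1) -> geR r (A 1 0) -> geR r (A 1 1) -> MG r A.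
Proof. by move=> h1 h2 h3 h4 i j; case: (ord2P i) => ->; case: (ord2P j) => ->. Qed.

Lemma conj_top (D c : R) (K Ga Gb : 'M[F]_2) :
  geR (1 - D) (Ga 0 0) -> geR (1 - D) (Ga 0 1) -> geR (1 - D) (Gb 0 0) ->
  Gb 1 0 != 0 -> (val (Gb 1 0))%:~R <= - D -> EB 0 c K ->
  K *m Gb = Ga *m K -> geR (1 + c) (K 0 1).
Proof.
move=> a0 a1 b0 nz vb [k00 _ k10 _] E.
have E' := congr1 (fun M : 'M[F]_2 => M 0 0) E; rewrite /= !mul2E in E'.
have -> : K 0 1 = (Ga 0 0 * K 0 0 + Ga 0 1 * K 1 0 - K 0 0 * Gb 0 0) / Gb 1 0.
  by apply: (mulIf nz); rewrite mulfVK // -E'; ring.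
have hn : geR (1 - D + c) (Ga 0 0 * K 0 0 + Ga 0 1 * K 1 0 - K 0 0 * Gb 0 0).
  apply: geRB; [apply: geRD|].
  - exact: geRM a0 k00.
  - by apply: (geR_le _ (geRM a1 k10)); lra.
  - by apply: (geR_le _ (geRM k00 b0)); lra.
by apply: (geR_le _ (geR_div nz hn)); lra.
Qed.

Lemma Iw_step t c K : 0 <= t <= 1 -> EB 0 c K -> geR (1 + c) (K 0 1) -> EB t c K.
Proof.
move=> /andP[t0 t1] [k00 _ k10 k11] k01; split => //.
  by apply: geR_le k01; lra.
by apply: geR_le k10; lra.
Qed.

Lemma det_c t c h : EB t c h -> \det h = 1 -> c <= 0.
Proof.
move=> [h00 h01 h10 h11] dh.
have : geR (c + c) (\det h).
  rewrite det2; apply: geRB; first exact: geRM.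
  by apply: (geR_le _ (geRM h01 h10)); lra.
rewrite dh => -[/eqP|]; first by rewrite oner_eq0.
rewrite v1 => hh; lra.
Qed.

Lemma EB_int t h : 0 <= t < 1 -> EB t 0 h -> EB 0 0 h.
Proof.
move=> /andP[t0 t1] [h00 h01 h10 h11]; split => //.
  by apply: geR_le h01; lra.
have H : geR (0%:~R) (h 1 0) by apply: (@geR_int 0 (0 - t)) => //; rewrite (_ : (0%:~R : R) = 0) //; lra.
rewrite (_ : (0%:~R : R) = 0) // in H; by apply: geR_le H; lra.
Qed.


Lemma in_PF0 : in_PF val (0 : F). Proof. by left. Qed.

Section Main.
Variable x : 'cV[F]_2 -> R.
Variable D : int.
Variable Gam : 'M[F]_2.
Local Notation d := (D%:~R : R).
Hypothesis hG1 : MPd val x (- d) Gam.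
Hypothesis hG2 : ~ MPd_plus val x (- d) Gam.

Definition vframe B := B \in unitmx /\ homot x (nrm val B 0 0).
Definition GF B := [/\ vframe B, geR (1 - d) (conj B Gam 0 0) & geR (1 - d) (conj B Gam 0 1)].

Lemma trGam : \tr Gam = 0. Proof. by case: hG1. Qed.

Lemma intD1 : ((D + 1)%:~R : R) = d + 1.
Proof. by rewrite intrD. Qed.

Lemma frame_DF B s G : vframe B -> MPd val x s G -> \tr G = 0 /\ DF 0 s (conj B G).
Proof.
move=> [Bu hB] h; have := MPd_homot hB h => /(MPd_frame _ _ _ Bu) [tr H].
by split.
Qed.

Lemma frame_facts B : vframe B -> MG (- d) (conj B Gam) /\
  ~ [/\ geR (1 - d) (conj B Gam 0 0), geR (1 - d) (conj B Gam 0 1)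
      & geR (1 - d) (conj B Gam 1 0)].
Proof.
move=> fB; have [Bu hB] := fB.
have [trG H] := frame_DF fB hG1.
have trG' : \tr (conj B Gam) = 0 by rewrite tr_conj.
have hn : - - d < (D + 1)%:~R by rewrite intD1; lra.
have e : (1 - (D + 1)%:~R : R) = - d by rewrite intD1; lra.
have a := DF_nec_a trG' H hn; rewrite e in a.
have b := DF_nec_b (lexx 0) H hn; rewrite e in b.
have c : geR (- d) (conj B Gam 1 0).
  have c0 : (D + 1)%:~R + 0 <= ((D + 1)%:~R : R) by rewrite addr0.
  by have := DF_nec_c H hn c0; rewrite e.
split.
  by apply: MG_of => //; rewrite (tr0E trG'); apply: geRN.
case=> a' b' c'; apply: hG2; exists (1 - d); first lra.
apply: (MPd_homot (homot_sym hB)); apply/(MPd_frame _ _ _ Bu); split => //.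
apply: (DF_suff trG' a' b' c'); lra.
Qed.

Lemma GF_entry B : vframe B -> geR (1 - d) (conj B Gam 0 0) ->
  geR (1 - d) (conj B Gam 0 1) ->
  conj B Gam 1 0 != 0 /\ (val (conj B Gam 1 0))%:~R <= - d.
Proof.
move=> fB a b; have [_ nall] := frame_facts fB.
have [e|nz] := eqVneq (conj B Gam 1 0) 0.
  by exfalso; apply: nall; split => //; left.
split => //; rewrite leNgt; apply/negP => h; apply: nall; split => //; right.
have : (val (conj B Gam 1 0) : int) > - D.
  by rewrite -(ltr_int R) intrN.
move=> hi; have : 1 - D <= val (conj B Gam 1 0) by lia.
by rewrite -(ler_int R) intrB.
Qed.

Lemma invH (B1 B2 : 'M[F]_2) : B1 \in unitmx -> B2 \in unitmx ->
  invmx (invmx B2 *m B1) = invmx B1 *m B2.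
Proof.
move=> u1 u2; apply: inv_uniq.
by rewrite mulmxA -(mulmxA _ B2) (mulmxV u2) mulmx1 (mulVmx u1).
Qed.

Lemma GF_homot B1 B2 t : GF B1 -> GF B2 -> 0 <= t <= 1 ->
  exists c, forall w, w != 0 -> Nt t (invmx B2 *m B1 *m w) = Nt t w + c.
Proof.
move=> [f1 a1 b1] [f2 a2 b2] t01.
have [u1 h1] := f1; have [u2 h2] := f2.
set H := invmx B2 *m B1.
have Hu : H \in unitmx by rewrite unitmx_mul unitmx_inv u1 u2.
have [c hc] := homot_trans (homot_sym h2) h1.
have E0 : forall w, w != 0 -> Nt 0 (H *m w) = Nt 0 w + c.
  move=> w w0; have v0 : B1 *m w != 0 by exact: unit_mulK.
  have := hc _ v0; rewrite !nrmE (mulKmx u1) /H -mulmxA //.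
have [e1 e2] := eq_EB Hu E0.
have [nz vb] := GF_entry f1 a1 b1.
have [nz2 vb2] := GF_entry f2 a2 b2.
have r1 : H *m conj B1 Gam = conj B2 Gam *m H.
  by rewrite /H /conj !mulmxA (mulmxK u1) (mulmxK u2).
have r2 : invmx H *m conj B2 Gam = conj B1 Gam *m invmx H.
  by rewrite /H invH // /conj !mulmxA (mulmxK u1) (mulmxK u2).
have k1 := conj_top a2 b2 a1 nz vb e1 r1.
have k2 := conj_top a1 b1 a2 nz2 vb2 e2 r2.
exists c; apply: EB_eq => //; apply: Iw_step => //.
Qed.

Lemma GF_chamber B1 B2 (z : 'cV[F]_2 -> R) : GF B1 -> GF B2 ->
  chamber_of val B2 z -> chamber_of val B1 z.
Proof.
move=> g1 g2 [t [t01 hz]]; exists t; split => //.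
have [[u1 _] _ _] := g1; have [[u2 _] _ _] := g2.
have t01' : 0 <= t <= 1 by case/andP: t01 => ? ?; apply/andP; split; lra.
have [c hc] := GF_homot g1 g2 t01'.
apply: (homot_trans hz); exists c => v v0.
rewrite !nrmE; have w0 : invmx B1 *m v != 0 by apply: unit_mulK; rewrite ?unitmx_inv.
by rewrite -hc // -!mulmxA (mulKVmx u1).
Qed.

Lemma GF_prop B Gam' (z : 'cV[F]_2 -> R) t : GF B -> MPd_plus val x (- d) (Gam' - Gam) ->
  0 < t < 1 -> homot z (nrm val B 0 t) ->
  MPd val x (- d) Gam' /\ MPd_plus val z (- d) Gam'.
Proof.
move=> [fB a b] [s hs hE] t01 hz.
have [Bu hB] := fB.
have [trE H] := frame_DF fB hE.
have trE' : \tr (conj B (Gam' - Gam)) = 0 by rewrite tr_conj.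
have hn : - s < d by lra.
have e : (1 - D%:~R : R) = 1 - d by [].
have ea := DF_nec_a trE' H hn.
have eb := DF_nec_b (lexx 0) H hn.
have ec : geR (1 - d) (conj B (Gam' - Gam) 1 0).
  have c0 : d + 0 <= d by rewrite addr0.
  exact: DF_nec_c H hn c0.
have [mg _] := frame_facts fB.
have eG : Gam' = Gam + (Gam' - Gam) by rewrite addrC subrK.
have trG' : \tr Gam' = 0 by rewrite eG mxtraceD trE trGam addr0.
have trc : \tr (conj B Gam') = 0 by rewrite tr_conj.
have c00 : geR (1 - d) (conj B Gam' 0 0) by rewrite eG conjD mxE; apply: geRD.
have c01 : geR (1 - d) (conj B Gam' 0 1) by rewrite eG conjD mxE; apply: geRD.
have c10 : geR (- d) (conj B Gam' 1 0).
  rewrite eG conjD mxE; apply: geRD; first exact: mg.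
  by apply: geR_le ec; lra.
split.
  apply: (MPd_homot (homot_sym hB)); apply/(MPd_frame _ _ _ Bu); split => //.
  have c00' : geR (- d) (conj B Gam' 0 0) by apply: geR_le c00; lra.
  have c01' : geR (- d) (conj B Gam' 0 1) by apply: geR_le c01; lra.
  apply: (DF_suff trc c00' c01' c10); lra.
have /andP[t0 t1] := t01.
have [u [u0 u1 u2]] : exists u : R, [/\ 0 < u, u <= t & u <= 1 - t].
  exists (Num.min t (1 - t)); split.
  - by rewrite lt_min t0 /=; lra.
  - by rewrite ge_min lexx.
  - by rewrite ge_min lexx orbT.
exists (- d + u); first lra.
apply: (MPd_homot (homot_sym hz)); apply/(MPd_frame _ _ _ Bu); split => //.
apply: (DF_suff trc c00 c01 c10); lra.
Qed.





Lemma stab_frame (al : 'cV[F]_2 -> R) B t g : B \in unitmx -> g \in unitmx ->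
  homot al (nrm val B 0 t) ->
  (homot (fun v => al (g *m v)) al <->
   exists c, forall w, w != 0 -> Nt t (conj B g *m w) = Nt t w + c).
Proof.
move=> Bu gu [c1 h1]; split.
  case=> c hc; exists c => w w0; set v := B *m w.
  have v0 : v != 0 by exact: unit_mulK.
  have gv0 : g *m v != 0 by exact: unit_mulK.
  have := hc v v0; rewrite !h1 // !nrmE.
  have -> : invmx B *m (g *m v) = conj B g *m w by rewrite /conj -!mulmxA.
  rewrite /v (mulKmx Bu) => e; lra.
case=> c hc; exists c => v v0.
have gv0 : g *m v != 0 by exact: unit_mulK.
have w0 : invmx B *m v != 0 by apply: unit_mulK; rewrite ?unitmx_inv.
rewrite !h1 // !nrmE.
have -> : invmx B *m (g *m v) = conj B g *m (invmx B *m v).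
  by rewrite /conj !mulmxA (mulmxK Bu).
rewrite hc //; lra.
Qed.

Lemma comm_inv (A G : 'M[F]_2) : A \in unitmx -> A *m G = G *m A ->
  invmx A *m G = G *m invmx A.
Proof.
move=> Au e; have := congr1 (fun M => invmx A *m M *m invmx A) e.
by rewrite /= (mulKmx Au) !mulmxA (mulmxK Au).
Qed.

Lemma det_conj B g : B \in unitmx -> \det (conj B g) = \det g.
Proof.
move=> Bu; have Bu' : \det B \is a GRing.unit by rewrite -unitmxE.
by rewrite /conj !det_mulmx det_inv mulrC mulrA mulrV // mul1r.
Qed.

Lemma cent_eq B t (z : 'cV[F]_2 -> R) g : GF B -> 0 < t < 1 -> homot z (nrm val B 0 t) ->
  (in_cent x Gam g <-> in_cent z Gam g).
Proof.
move=> gB t01 hz; have [fB a b] := gB; have [Bu hB] := fB.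
have [nz vb] := GF_entry fB a b.
have /andP[t0 t1] := t01.
suff core : \det g = 1 -> g *m Gam *m invmx g = Gam ->
    (homot (fun v => x (g *m v)) x <-> homot (fun v => z (g *m v)) z).
  by split=> -[[dg hs] hc]; split => //; split => //; apply/core.
move=> dg hc.
have gu : g \in unitmx by rewrite unitmxE dg unitr1.
have com : g *m Gam = Gam *m g by rewrite -{2}hc (mulmxKV gu).
set h := conj B g; set G2 := conj B Gam.
have hu : h \in unitmx by rewrite /h /conj !unitmx_mul unitmx_inv Bu gu.
have hcom : h *m G2 = G2 *m h by rewrite /h /G2 -!conjM // com.
have hcom' : invmx h *m G2 = G2 *m invmx h.
  exact: comm_inv.
have dh : \det h = 1 by rewrite det_conj.
have dhi : \det (invmx h) = 1 by rewrite det_inv dh invr1.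
rewrite (stab_frame Bu gu hB) (stab_frame Bu gu hz); split.
  case=> c hc'; have [e1 e2] := eq_EB hu hc'.
  have k1 := conj_top a b a nz vb e1 hcom.
  have k2 := conj_top a b a nz vb e2 hcom'.
  have t01' : 0 <= t <= 1 by apply/andP; split; lra.
  by exists c; apply: EB_eq => //; apply: Iw_step.
case=> c hc'; have [e1 e2] := eq_EB hu hc'.
have c1 := det_c e1 dh; have c2 := det_c e2 dhi.
have c0 : c = 0 by lra.
rewrite c0 oppr0 in e1 e2.
have t01' : 0 <= t < 1 by apply/andP; split; lra.
exists 0; apply: EB_eq => //; first exact: EB_int t01' e1.
by rewrite oppr0; exact: EB_int t01' e2.
Qed.

Lemma notgeR a : geR (- d) a -> ~ geR (1 - d) a -> a != 0 /\ (val a)%:~R <= - d.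
Proof.
move=> h1 h2; have [e|nz] := eqVneq a 0; first by exfalso; apply: h2; left.
split => //; rewrite leNgt; apply/negP => h; apply: h2; right.
have : (val a : int) > - D by rewrite -(ltr_int R) intrN.
move=> hi; have : 1 - D <= val a by lia.
by rewrite -(ler_int R) intrB.
Qed.

Lemma MG0_EB A : MG 0 A -> EB 0 0 A.
Proof. by move=> h; split; rewrite ?addr0 ?subr0; apply: h. Qed.

Lemma GF_of_k0 B k0 k0' : vframe B -> k0' *m k0 = 1%:M -> k0 *m k0' = 1%:M ->
  MG 0 k0 -> MG 0 k0' ->
  geR (1 - d) ((k0' *m conj B Gam *m k0) 0 0) ->
  geR (1 - d) ((k0' *m conj B Gam *m k0) 0 1) -> GF (B *m k0).
Proof.
move=> [Bu hB] e1 e2 m m' g0 g1.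
have [k0'u k0u] := mulmx1_unit e1.
have iB : invmx (B *m k0) = k0' *m invmx B.
  apply: inv_uniq; rewrite !mulmxA -(mulmxA _ (invmx B)) (mulVmx Bu) mulmx1 //.
have cE : conj (B *m k0) Gam = k0' *m conj B Gam *m k0.
  by rewrite /conj iB !mulmxA.
split; last 2 first.
- by rewrite cE.
- by rewrite cE.
split; first by rewrite unitmx_mul Bu k0u.
apply: (homot_trans hB); exists 0 => v v0.
rewrite !nrmE iB -mulmxA (EB_eq (t:=0) (c:=0) (h:=k0')) //; first by rewrite !addr0.
all: try (by apply: unit_mulK; rewrite ?unitmx_inv).
all: try (exact: MG0_EB).
all: by rewrite oppr0 (inv_uniq e2); apply: MG0_EB.
Qed.





Lemma detX2 (A : 'M[F]_2) k : \det (A ^+ k) = \det A ^+ k.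
Proof.
elim: k => [|k IH]; first by rewrite !expr0 det1.
by rewrite !exprS detM IH.
Qed.

Lemma ent_sub (A B : 'M[F]_2) i j : (A - B) i j = A i j - B i j.
Proof. by rewrite !mxE. Qed.


Lemma exists_GF B : vframe B ->
  (exists N, nilpotent_sl2 N /\ MPd_plus val x (- d) (N - Gam)) ->
  exists B0, GF B0.
Proof.
move=> fB [N [[trN [k Nk]] [s hs hE]]].
have [Bu hB] := fB.
have [trE H] := frame_DF fB hE.
set E1 := conj B (N - Gam).
have trE' : \tr E1 = 0 by rewrite tr_conj.
have hn : - s < d by lra.
have c0 : d + 0 <= d by rewrite addr0.
have mE : MG (1 - d) E1.
  apply: MG_of.
  - exact: DF_nec_a trE' H hn.
  - exact: DF_nec_b (lexx 0) H hn.
  - exact: DF_nec_c H hn c0.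
  - rewrite (tr0E trE'); apply: geRN; exact: DF_nec_a trE' H hn.
have [mg nall] := frame_facts fB.
set G1 := conj B Gam; set N1 := conj B N.
have detN : \det N = 0.
  case: k Nk => [|k] Nk.
    exfalso; have := congr1 (fun M : 'M[F]_2 => M 0 0) Nk.
    by rewrite expr0 !mxE /= => /eqP; rewrite oner_eq0.
  have := detX2 N k.+1; rewrite Nk det0 => /esym /eqP.
  by rewrite expf_eq0 /= => /eqP.
have detN1 : \det N1 = 0 by rewrite /N1 det_conj.
have trN1 : \tr N1 = 0 by rewrite /N1 tr_conj.
have eN : N1 = G1 + E1 by rewrite /E1 conjB /N1 /G1 addrC subrK.
have eG : G1 = N1 - E1 by rewrite eN addrK.
set u := N1 0 0; set v := N1 0 1; set w := N1 1 0.
have n11 : N1 1 1 = - u by rewrite (tr0E trN1).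
have rel : u * u + v * w = 0.
  by move: detN1; rewrite det2 n11 -/u -/v -/w => e; rewrite -oppr0 -e; ring.
have gN i j : geR (- d) (N1 i j).
  rewrite eN mxE; apply: geRD; first exact: mg.
  by apply: (geR_le _ (mE i j)); lra.
suff H0 : exists k0 k0', [/\ k0' *m k0 = 1%:M, k0 *m k0' = 1%:M,
   MG 0 k0, MG 0 k0' & (k0' *m N1 *m k0) 0 0 = 0 /\ (k0' *m N1 *m k0) 0 1 = 0].
  have [k0 [k0' [e1 e2 m m' [z0 z1]]]] := H0.
  exists (B *m k0); apply: (GF_of_k0 fB e1 e2 m m').
  - have mm := MG_mul (MG_mul m' mE) m.
    rewrite -/G1 eG mulmxBr mulmxBl ent_sub z0 sub0r; apply: geRN.
    by apply: (geR_le _ (mm 0 0)); lra.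
  - have mm := MG_mul (MG_mul m' mE) m.
    rewrite -/G1 eG mulmxBr mulmxBl ent_sub z1 sub0r; apply: geRN.
    by apply: (geR_le _ (mm 0 1)); lra.
clearbody N1.
have unip X : geR 0 X -> exists k0 k0', [/\ k0' *m k0 = 1%:M, k0 *m k0' = 1%:M,
   MG 0 k0, MG 0 k0' & k0 = mx22 1 X 0 1 /\ k0' = mx22 1 (- X) 0 1].
  move=> hX; exists (mx22 1 X 0 1), (mx22 1 (- X) 0 1); split => //.
  - by apply: mx2_ext; rewrite !mul2E !mxE /=; ring.
  - by apply: mx2_ext; rewrite !mul2E !mxE /=; ring.
  - apply: MG_of; rewrite !mxE /=; by [ | apply: geR1F | left | apply: geRN].
  - apply: MG_of; rewrite !mxE /=; by [ | apply: geR1F | left | apply: geRN].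
have [gu|ngu] := classic (geR (1 - d) u); last first.
  have [u0 vu] := notgeR (gN 0 0) ngu.
  have hX : geR 0 (- v / u).
    by apply: (geR_le _ (geR_div u0 (geRN (gN 0 1)))); lra.
  have [k0 [k0' [e1 e2 m m' [ek ek']]]] := unip _ hX; subst k0 k0'.
  exists (mx22 1 (- v / u) 0 1), (mx22 1 (- (- v / u)) 0 1); split => //.
  split.
    transitivity ((u * u + v * w) / u); last by rewrite rel mul0r.
    by rewrite !mul2E !mxE /= n11 -/u -/v -/w; field.
  transitivity (- (u * u + v * w) * v / (u * u)); last by rewrite rel oppr0 !mul0r.
  by rewrite !mul2E !mxE /= n11 -/u -/v -/w; field.
have [gv|ngv] := classic (geR (1 - d) v); last first.
  have [v0 vv] := notgeR (gN 0 1) ngv.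
  set Y := - u / v.
  have hY : geR 0 Y.
    by apply: (geR_le _ (geR_div v0 (geRN gu))); lra.
  exists (mx22 0 1 1 Y), (mx22 (- Y) 1 1 0); split.
  - by apply: mx2_ext; rewrite !mul2E !mxE /=; ring.
  - by apply: mx2_ext; rewrite !mul2E !mxE /=; ring.
  - apply: MG_of; rewrite !mxE /=; by [ | apply: geR1F | left | apply: geRN].
  - apply: MG_of; rewrite !mxE /=; by [ | apply: geR1F | left | apply: geRN].
  split.
    by rewrite !mul2E !mxE /= n11 -/u -/v -/w /Y; field.
  transitivity ((u * u + v * w) / v); last by rewrite rel mul0r.
  by rewrite !mul2E !mxE /= n11 -/u -/v -/w /Y; field.
have ngw : ~ geR (1 - d) w.
  move=> gw; apply: nall; rewrite -/G1 eG !ent_sub; split; apply: geRB => //; exact: mE.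
have [w0 vw] := notgeR (gN 1 0) ngw.
have hX : geR 0 (u / w).
  by apply: (geR_le _ (geR_div w0 (gN 0 0))); lra.
have [k0 [k0' [e1 e2 m m' [ek ek']]]] := unip _ hX; subst k0 k0'.
exists (mx22 1 (u / w) 0 1), (mx22 1 (- (u / w)) 0 1); split => //.
split.
  by rewrite !mul2E !mxE /= n11 -/u -/v -/w; field.
transitivity ((u * u + v * w) / w); last by rewrite rel mul0r.
by rewrite !mul2E !mxE /= n11 -/u -/v -/w; field.
Qed.





Lemma geR_pi y a : geR y (pi * a) <-> geR (y - 1) a.
Proof.
have [->|a0] := eqVneq a 0; first by rewrite mulr0; split => _; left.
split.
  case=> [/eqP|h]; first by rewrite mulf_eq0 (negbTE pi0) (negbTE a0).
  by right; move: h; rewrite vM // vpi intrD => h; lra.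
case=> [e|h]; first by rewrite e eqxx in a0.
by right; rewrite vM // vpi intrD; lra.
Qed.

Lemma le_iff_eq (a b : R) : (forall y, y <= a <-> y <= b) -> a = b.
Proof.
move=> H; apply/eqP; rewrite eq_le; apply/andP; split.
  by apply/H.
by apply/H.
Qed.

Definition Esw : 'M[F]_2 := mx22 0 1 pi^-1 0.
Definition Esw' : 'M[F]_2 := mx22 0 pi 1 0.

Lemma Nt_swap s w : w != 0 -> Nt s (Esw' *m w) = Nt (1 - s) w + s.
Proof.
move=> w0.
have E0 : (Esw' *m w) 0 0 = pi * w 1 0 by rewrite mul2E !mxE /=; ring.
have E1 : (Esw' *m w) 1 0 = w 0 0 by rewrite mul2E !mxE /=; ring.
have ew : Esw' *m w != 0.
  apply/eqP => e; move/eqP: w0; apply; apply: cv2_eq0.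
  - by rewrite -E1 e mxE.
  - by move: E0; rewrite e mxE => /esym /eqP; rewrite mulf_eq0 (negbTE pi0) => /eqP.
apply: le_iff_eq => y.
rewrite (Nt_ge _ _ ew) E0 E1 geR_pi.
have -> : y <= Nt (1 - s) w + s <-> y - s <= Nt (1 - s) w by split => h; lra.
rewrite (Nt_ge _ _ w0) (_ : y - s - (1 - s) = y - 1); last by ring.
by split; case.
Qed.

Lemma swap_frame B2 : B2 \in unitmx -> exists B', [/\ B' \in unitmx,
  (forall v, v != 0 -> nrm val B' (0 : R) 0 v = nrm val B2 (0 : R) 1 v) &
  (forall (z : 'cV[F]_2 -> R), chamber_of val B2 z <-> chamber_of val B' z)].
Proof.
move=> u2.
have e1 : Esw' *m Esw = 1%:M.
  by apply: mx2_ext; rewrite !mul2E !mxE /= ?mulfV //; ring.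
have e2 : Esw *m Esw' = 1%:M.
  by apply: mx2_ext; rewrite !mul2E !mxE /= ?mulVf //; ring.
have iB : invmx (B2 *m Esw) = Esw' *m invmx B2.
  apply: inv_uniq; rewrite !mulmxA -(mulmxA _ (invmx B2)) (mulVmx u2) mulmx1 //.
have [_ Eu] := mulmx1_unit e1.
have key (s : R) v : v != 0 -> nrm val (B2 *m Esw) 0 s v = nrm val B2 0 (1 - s) v + s.
  move=> v0; rewrite !nrmE iB -mulmxA Nt_swap //.
  by apply: unit_mulK; rewrite ?unitmx_inv.
exists (B2 *m Esw); split.
- by rewrite unitmx_mul u2 Eu.
- by move=> v v0; rewrite key // subr0 addr0.
move=> z; split.
  case=> t [t01 hz]; exists (1 - t); split.
    by case/andP: t01 => ? ?; apply/andP; split; lra.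
  apply: (homot_trans hz); exists (- (1 - t)) => v v0.
  rewrite key // (_ : 1 - (1 - t) = t); [ring|ring].
case=> t [t01 hz]; exists (1 - t); split.
  by case/andP: t01 => ? ?; apply/andP; split; lra.
apply: (homot_trans hz); exists t => v v0.
by rewrite key.
Qed.

Lemma main_sec : is_vertex val x ->
  (exists N, nilpotent_sl2 N /\ MPd_plus val x (- d) (N - Gam)) ->
  exists C : ('cV[F]_2 -> R) -> Prop,
    [/\ is_chamber val C, adjacent val C x,
        (forall z, C z -> MPd val x (- d) Gam /\ MPd_plus val z (- d) Gam),
        (forall C' : ('cV[F]_2 -> R) -> Prop, is_chamber val C' -> adjacent val C' x ->
           (forall z, C' z -> MPd val x (- d) Gam /\ MPd_plus val z (- d) Gam) ->
           forall z, C' z <-> C z) &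
        ((forall Gam', MPd_plus val x (- d) (Gam' - Gam) ->
           forall z, C z -> MPd val x (- d) Gam' /\ MPd_plus val z (- d) Gam') /\
        (forall z, C z -> forall g, in_cent x Gam g <-> in_cent z Gam g))].
Proof.
move=> [B [Bu hB]] hnil.
have fB : vframe B by split.
have [B0 gB0] := exists_GF fB hnil.
have [[B0u hB0] a0 b0] := gB0.
exists (chamber_of val B0).
have prop5 : forall Gam', MPd_plus val x (- d) (Gam' - Gam) ->
    forall z, chamber_of val B0 z -> MPd val x (- d) Gam' /\ MPd_plus val z (- d) Gam'.
  by move=> Gam' hG z [t [t01 hz]]; exact: GF_prop gB0 hG t01 hz.
have prop3 : forall z, chamber_of val B0 z -> MPd val x (- d) Gam /\ MPd_plus val z (- d) Gam.
  apply: prop5; rewrite subrr; exists (- d + 1); first lra.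
  split; first by rewrite /in_sl2 mxtrace0.
  by move=> Y _; rewrite mul0mx mxtrace0; left.
split => //.
- by exists B0; split.
- by exists B0; split => //; left.
- move=> C' _ [B2 [B2u hC' hx2]] hprop.
  have [B' [B'u hB' hC'']] : exists B', [/\ B' \in unitmx, homot x (nrm val B' 0 0)
      & forall z, C' z <-> chamber_of val B' z].
    case: hx2 => hx2.
      by exists B2; split.
    have [B' [u' e' ch']] := swap_frame B2u.
    exists B'; split => //.
      by apply: (homot_trans hx2); exists 0 => v v0; rewrite e' // addr0.
    by move=> z; rewrite hC' ch'.
  have fB' : vframe B' by split.
  have gB' : GF B'.
    pose z0 := nrm val B' (0 : R) (1 / 2).
    have cz : C' z0.
      apply/hC''; exists (1 / 2); split; last exact: homot_refl.
      by apply/andP; split; lra.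
    have [_ [s hs hM]] := hprop _ cz.
    have /(MPd_frame _ _ _ B'u) [trG H] := hM.
    have trc : \tr (conj B' Gam) = 0 by rewrite tr_conj.
    have hn : - s < d by lra.
    have h2 : (0 : R) <= 1 / 2 by lra.
    have e : (1 - D%:~R : R) = 1 - d by [].
    split => //.
    - exact: DF_nec_a trc H hn.
    - exact: DF_nec_b h2 H hn.
  move=> z; rewrite hC''; split; apply: GF_chamber => //.
- split => // z [t [t01 hz]] g; exact: cent_eq gB0 t01 hz.
Qed.

End Main.

Lemma d_int (x : 'cV[F]_2 -> R) (d : R) Gam B : B \in unitmx ->
  homot x (nrm val B 0 0) ->
  MPd val x (- d) Gam -> ~ MPd_plus val x (- d) Gam -> d = (Num.floor d)%:~R.
Proof.
move=> Bu hB hG1 hG2.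
set D0 := Num.floor d.
have f1 : (D0%:~R : R) <= d by apply: real_floor_le; exact: num_real.
have f2 : d < (D0 + 1)%:~R by apply: real_floorD1_gt; exact: num_real.
have [trG H] : \tr Gam = 0 /\ DF 0 (- d) (conj B Gam).
  by have := MPd_homot hB hG1 => /(MPd_frame _ _ _ Bu).
have trc : \tr (conj B Gam) = 0 by rewrite tr_conj.
have hn : - - d < (D0 + 1)%:~R by lra.
have e : (1 - (D0 + 1)%:~R : R) = - D0%:~R by rewrite intrD; ring.
have a := DF_nec_a trc H hn; rewrite e in a.
have b := DF_nec_b (lexx 0) H hn; rewrite e in b.
have c0 : (D0 + 1)%:~R + 0 <= ((D0 + 1)%:~R : R) by rewrite addr0.
have c := DF_nec_c H hn c0; rewrite e in c.
apply/eqP; rewrite eq_le f1 andbT; rewrite leNgt; apply/negP => lt.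
apply: hG2; exists (- D0%:~R); first lra.
apply: (MPd_homot (homot_sym hB)); apply/(MPd_frame _ _ _ Bu); split => //.
apply: (DF_suff trc a b c); lra.
Qed.

End S.

Unset Implicit Arguments.
Set Strict Implicit.

Theorem mainTheorem5 (F : fieldType) (val : F -> int) (p : nat)
  (HF : nonarch_local_field val p) (R : realType)
  (x : 'cV[F]_2 -> R) (hx : is_vertex val x)
  (d : R) (hd : 0 < d) (Gam : 'M[F]_2)
  (hG1 : MPd val x (- d) Gam) (hG2 : ~ MPd_plus val x (- d) Gam)
  (hnil : exists N, nilpotent_sl2 N /\ MPd_plus val x (- d) (N - Gam)) :
  exists C : ('cV[F]_2 -> R) -> Prop,
    [/\ is_chamber val C, adjacent val C x,
        (forall z, C z -> MPd val x (- d) Gam /\ MPd_plus val z (- d) Gam),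
        (forall C' : ('cV[F]_2 -> R) -> Prop, is_chamber val C' -> adjacent val C' x ->
           (forall z, C' z -> MPd val x (- d) Gam /\ MPd_plus val z (- d) Gam) ->
           forall z, C' z <-> C z) &
        ((forall Gam', MPd_plus val x (- d) (Gam' - Gam) ->
           forall z, C z -> MPd val x (- d) Gam' /\ MPd_plus val z (- d) Gam') /\
        (forall z, C z -> forall g, in_cent x Gam g <-> in_cent z Gam g))].
Proof.
have [vM vD [pi [pi0 vpi]] [_ _ [pp p3 pPF]]] := HF.
have [two0 v2] := @two_facts F val vM vD R p pp p3 pPF.
have [B [Bu hB]] := hx.
have hdD := d_int vM vD pi0 vpi two0 v2 Bu hB hG1 hG2.
move: (Num.floor d) hdD => D hdD; subst d.
have H := main_sec vM vD pi0 vpi two0 v2 hG1 hG2 hx hnil.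
exact H.
Qed.
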